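(* Let $X\ge 1$. Let $\mathcal{Q}$ be a set of pairwise coprime positive integers with $\prod_{q \in \mathcal{Q}} q \ge X$. Let $P \subseteq \{1,\dots,X\}$ be an arithmetic progression of length at least $X^{3/4}$ whose common difference is coprime to all $q \in \mathcal{Q}$. Let $d, m \ge 1$ be integers with $(\max_{q \in \mathcal{Q}} q)^{dm} \le X^{1/16}$. Let $\Gamma := \pi_{\mathcal{Q}}(P)\subseteq G_{\mathcal{Q}}$. Let $f \in B(P)$ with $\mathbb{E}_{x\in P} |f(x)| = \alpha$, and let $g := \Psi_{P,\mathcal{Q}} f \in B(G_{\mathcal{Q}})$. Then \[ \mathbb{E}_{x\in\Gamma} |W_{d} g(x)|^{2m} \le \mathbb{E}_{x\in G_{\mathcal{Q}}} |W_{d} g(x)|^{2m} + \alpha^{2m} X^{-1/4}.\]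
   Context: $B(\Sigma)$ denotes the space of complex-valued functions on a finite set $\Sigma$. $G_{\mathcal{Q}} := \prod_{q\in\mathcal{Q}} \mathbb{Z}/q\mathbb{Z}\cong \mathbb{Z}/(\prod_{q\in\mathcal{Q}}q)\mathbb{Z}$, and $\pi_{\mathcal{Q}}:\mathbb{Z}\to G_{\mathcal{Q}}$ is the natural projection. Characters of $G_{\mathcal{Q}}$ are identified with $\xi=\sum_{q\in\mathcal{Q}}\xi_q/q\in\bigoplus_{q\in\mathcal{Q}}(\frac1q\mathbb{Z}/\mathbb{Z})$, acting by $x\mapsto e(\xi x)$ with $e(t)=e^{2\pi i t}$; $|\xi|$ denotes the number of $q$ with $\xi_q\not\equiv 0$. Fourier coefficients: $\widehat g(\xi)=\mathbb{E}_{x\in G_{\mathcal{Q}}} g(x)\overline{e(\xi x)}$. The level-$d$ operator is $W_d g(x)=\sum_{\xi:|\xi|=d}\widehat g(\xi)e(\xi x)$. The lift $\Psi_{P,\mathcal{Q}}:B(P)\to B(G_{\mathcal{Q}})$ is defined by $(\Psi_{P,\mathcal{Q}}f)(\pi_{\mathcal{Q}}(x))=|P|^{-1}|G_{\mathcal{Q}}|f(x)$ for $x\in P$ and $0$ off $\pi_{\mathcal{Q}}(P)$ (well-defined since $\pi_{\mathcal{Q}}$ is injective on $P$). *)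

(* Defs.v *)
From mathcomp Require Import all_boot all_algebra.
From mathcomp Require Import all_classical all_reals all_analysis.
From mathcomp Require Import complex.
Import GRing.Theory Num.Theory.
Local Open Scope ring_scope.

Section Defs.
Variable R : realType.
Local Notation C := R[i].

Definition ee (t : R) : C := (cos (2 * pi * t) +i* sin (2 * pi * t))%C.

Definition modc (z : C) : R := Normc.normc z.

Definition avg (s : seq nat) (h : nat -> R) : R :=
  (size s)%:R^-1 * \sum_(x <- s) h x.

(* Q is given as a duplicate-free list of moduli. *)
(* |G_Q| = prod_{q in Q} q; G_Q = Z/NZ, elements represented by 0..N-1 *)
Definition NQ (Q : seq nat) : nat := \prod_(q <- Q) q.
Definition piQ (Q : seq nat) (x : nat) : nat := x %% NQ Q.
Definition maxQ (Q : seq nat) : nat := \max_(q <- Q) q.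

Definition avgG (Q : seq nat) (h : nat -> R) : R := avg (iota 0 (NQ Q)) h.

(* characters xi = sum_q xi_q / q, with xi_q in {0,..,q-1}, indexed by
   positions i < size Q (the modulus being q_i = nth 1 Q i) *)
Definition charQ (Q : seq nat) := {ffun 'I_(size Q) -> 'I_(maxQ Q)}.
Definition is_charQ (Q : seq nat) (xi : charQ Q) : bool :=
  [forall i, (val (xi i) < nth 1 Q i)%N].
Definition char_wt (Q : seq nat) (xi : charQ Q) : nat :=
  #|[set i : 'I_(size Q) | ~~ (nth 1 Q i %| val (xi i))%N]|.
Definition char_val (Q : seq nat) (xi : charQ Q) (x : nat) : C :=
  ee (\sum_(i < size Q) ((val (xi i))%:R * x%:R / (nth 1 Q i)%:R)).

Definition fourier (Q : seq nat) (g : nat -> C) (xi : charQ Q) : C :=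
  (NQ Q)%:R^-1 * \sum_(x < NQ Q) g x * (char_val Q xi x)^*%C.

Definition Wd (Q : seq nat) (d : nat) (g : nat -> C) (x : nat) : C :=
  \sum_(xi : charQ Q | is_charQ Q xi && (char_wt Q xi == d)) fourier Q g xi * char_val Q xi x.

Definition AP (a r L : nat) : seq nat := [seq a + r * k | k <- iota 0 L].

Definition PsiPQ (P Q : seq nat) (f : nat -> C) (z : nat) : C :=
  let PP := map (piQ Q) P in
  if z \in PP then ((NQ Q)%:R / (size P)%:R)%:C%C * f (nth 0%N P (index z PP))
  else 0.

Definition GammaQ (P Q : seq nat) : seq nat := undup (map (piQ Q) P).

End Defs.

Arguments ee {R}.
Arguments modc {R}.
Arguments avg {R}.
Arguments avgG {R}.
Arguments char_val {R}.
Arguments fourier {R}.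
Arguments Wd {R}.
Arguments PsiPQ {R}.

(* Main.v *)
Require Import Defs.
From mathcomp Require Import all_boot all_algebra.
From mathcomp Require Import all_classical all_reals all_analysis.
From mathcomp Require Import complex.
From mathcomp Require Import ring lra zify.
Import order.Order.TTheory GRing.Theory Num.Theory.
Local Open Scope ring_scope.


Section EE.
Variable R : realType.
Local Notation C := R[i].

Lemma modcE (z : C) : (modc z)%:C%C = `|z|.
Proof. by case: z => a b; rewrite normc_def. Qed.

Lemma modc_ge0 (z : C) : 0 <= modc z.
Proof. have := normr_ge0 z; rewrite -modcE -[0 : C]/(0%:C)%C lecR //. Qed.

Lemma ee0 : ee 0 = 1 :> C.
Proof. by rewrite /ee mulr0 cos0 sin0. Qed.

Lemma eeD (s t : R) : ee (s + t) = ee s * ee t :> C.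
Proof.
rewrite /ee mulrDr cosD sinD; apply/eqP; rewrite eq_complex /=.
by rewrite !eqxx /= [sin _ * cos _]mulrC addrC eqxx.
Qed.

Lemma eeN (t : R) : ee (- t) = (ee t)^*%C :> C.
Proof. by rewrite /ee mulrN cosN sinN. Qed.

Lemma norm_ee (t : R) : `|ee t| = 1 :> C.
Proof.
rewrite normc_def /= cos2Dsin2 sqrtr1 //.
Qed.

Lemma ee_natshift (t : R) (k : nat) : ee (t + k%:R) = ee t :> C.
Proof.
have E : 2 * pi * (t + k%:R) = 2 * pi * t + (pi *+ 2) *+ k.
  by rewrite mulrDr mulr_natr; congr (_ + _); rewrite mulr_natl.
by rewrite /ee E (periodicn (@cosD2pi R)) (periodicn (@sinD2pi R)).
Qed.

Lemma ee_int (z : int) : ee (z%:~R) = 1 :> C.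
Proof.
case: z => k; first by rewrite -(add0r (Posz k)%:~R) ee_natshift ee0.
have -> : (Negz k)%:~R = - (k.+1)%:R :> R by rewrite NegzE mulrNz.
by rewrite -(ee_natshift _ k.+1) addNr ee0.
Qed.

Lemma eeMn (t : R) (k : nat) : ee (t * k%:R) = ee t ^+ k :> C.
Proof.
elim: k => [|k IH]; first by rewrite mulr0 ee0 expr0.
by rewrite -natr1 mulrDr mulr1 eeD IH exprSr.
Qed.

Lemma ee_ne1 (t : R) : 0 < t < 1 -> ee t != 1 :> C.
Proof.
move=> /andP[t0 t1]; rewrite /ee; apply/eqP => /eqP; rewrite eq_complex /= => /andP[/eqP c1 /eqP s0].
have pi0 := pi_gt0 R.
have [tl|tg|te] := ltgtP (2 * pi * t) pi.
- have : 0 < sin (2 * pi * t) by apply: sin_gt0_pi; rewrite tl andbT !mulr_gt0.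
  by rewrite s0 ltxx.
- have : 0 < sin (2 * pi * t - pi).
    apply: sin_gt0_pi; rewrite subr_gt0 tg /= ltrBlDr.
    have h : 2 * pi * t < 2 * pi * 1 by rewrite ltr_pM2l // mulr_gt0.
    rewrite mulr1 in h; lra.
  by rewrite sinB sinpi cospi s0 mul0r mulr0 subr0 ltxx.
- move: c1; rewrite te cospi => /eqP; rewrite -subr_eq0 -opprD oppr_eq0.
  by rewrite (_ : 1 + 1 = 2%:R) // pnatr_eq0.
Qed.

Lemma ee_frac (D : nat) (B : int) : (0 < D)%N -> ~~ (D%:Z %| B)%Z ->
  ee (B%:~R / D%:R) != 1 :> C.
Proof.
move=> D0 nd.
have D0' : (0 : R) < D%:R by rewrite ltr0n.
set s := (B %% D)%Z; set qq := (B %/ D)%Z.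
have Bq : B = qq * D%:Z + s by exact: divz_eq.
have -> : B%:~R / D%:R = qq%:~R + s%:~R / D%:R :> R.
  rewrite {1}Bq rmorphD rmorphM /= mulrDl -mulrA divff ?gt_eqF //.
  by rewrite mulr1.
rewrite eeD ee_int mul1r; apply: ee_ne1.
have s0 : s != 0 by apply: contra nd => /eqP s0; apply/dvdz_mod0P.
have s0' : (0 <= s)%R by apply: modz_ge0; rewrite eqz_nat -lt0n.
have sD : (s < D%:Z)%R by apply: ltz_pmod; rewrite ltz_nat.
apply/andP; split.
  by rewrite divr_gt0 // ltr0z lt_def s0 s0'.
by rewrite ltr_pdivrMr // mul1r -[D%:R]/((D%:Z)%:~R) ltr_int.
Qed.

Lemma geom_zero (w : C) (D : nat) : w ^+ D = 1 -> w != 1 ->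
  \sum_(k < D) w ^+ k = 0.
Proof.
move=> wD w1; have := subrX1 w D; rewrite wD subrr => /esym /eqP.
by rewrite mulf_eq0 subr_eq0 (negbTE w1) /= => /eqP.
Qed.

Lemma norm_1subX (w : C) (k : nat) : `|w| = 1 -> `|1 - w ^+ k| <= k%:R * `|1 - w|.
Proof.
move=> w1; elim: k => [|k IH]; first by rewrite expr0 subrr normr0 mul0r.
have -> : 1 - w ^+ k.+1 = (1 - w ^+ k) + w ^+ k * (1 - w).
  by rewrite mulrBr mulr1 -exprSr addrA subrK.
apply: (le_trans (ler_normD _ _)).
rewrite normrM normrX w1 expr1n mul1r -natr1 mulrDl mul1r.
by rewrite lerD2r.
Qed.

Lemma sum_nat2 (D : nat) : (\sum_(k < D) k * 2 = D * D.-1)%N.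
Proof.
elim: D => [|D IH]; first by rewrite big_ord0.
rewrite big_ord_recr /= IH; case: D {IH} => [|D] //=; lia.
Qed.

Lemma rou_bound (w : C) (D : nat) : `|w| = 1 -> w ^+ D = 1 -> w != 1 ->
  (0 < D)%N -> 2 <= D%:R * `|1 - w|.
Proof.
move=> w1 wD wn1 D0.
have S0 := geom_zero _ _ wD wn1.
have E : D%:R = \sum_(k < D) (1 - w ^+ k) :> C.
  by rewrite sumrB S0 subr0 sumr_const card_ord.
have H1 : D%:R <= \sum_(k < D) k%:R * `|1 - w| :> C.
  rewrite -[X in X <= _]ger0_norm ?ler0n // E.
  apply: (le_trans (ler_norm_sum _ _ _)).
  by apply: ler_sum => k _; apply: norm_1subX.
rewrite -mulr_suml in H1.
have H2 : (\sum_(k < D) k%:R : C) * 2 = D%:R * (D.-1)%:R.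
  by rewrite -natrM -sum_nat2 natr_sum mulr_suml; apply: eq_bigr => k _; rewrite natrM.
have nw0 : 0 <= `|1 - w| :> C by [].
have H3 : D%:R * 2 <= D%:R * (D.-1)%:R * `|1 - w| :> C.
  by rewrite -H2 mulrAC ler_pM2r // ltr0n.
rewrite -mulrA ler_pM2l ?ltr0n // in H3.
apply: (le_trans H3); rewrite ler_pM2r ?ler_nat ?leq_pred //.
by rewrite normr_gt0 subr_eq0 eq_sym; exact: wn1.
Qed.

Lemma geom_bound (u : C) (D L : nat) : `|u| = 1 -> u ^+ D = 1 -> u != 1 ->
  (0 < D)%N -> `|\sum_(k < L) u ^+ k| <= D%:R.
Proof.
move=> u1 uD un1 D0.
have H := rou_bound _ _ u1 uD un1 D0.
have nz : 0 < `|1 - u| by rewrite normr_gt0 subr_eq0 eq_sym.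
have E : `|1 - u| * `|\sum_(k < L) u ^+ k| = `|u ^+ L - 1|.
  by rewrite subrX1 normrM distrC.
have H2 : `|u ^+ L - 1| <= 2.
  apply: (le_trans (ler_normB _ _)); rewrite normrX u1 expr1n normr1.
  by [].
have : `|1 - u| * `|\sum_(k < L) u ^+ k| <= `|1 - u| * D%:R.
  by rewrite E (le_trans H2) // mulrC.
by rewrite ler_pM2l.
Qed.
End EE.


Section NT.
Variable Q : seq nat.
Local Notation n := (size Q).
Definition qq (i : 'I_n) : nat := nth 1 Q i.

Hypothesis Qpos : all (fun q => (0 < q)%N) Q.
Hypothesis Qcop : pairwise coprime Q.

Lemma qq_gt0 i : (0 < qq i)%N.
Proof. exact: (all_nthP 1 Qpos). Qed.

Lemma qq_cop (i j : 'I_n) : i != j -> coprime (qq i) (qq j).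
Proof.
move=> ij; have /pairwiseP H := Qcop.
have [lt|gt|eq] := ltngtP i j.
- by apply: (H 1 i j) => //; rewrite inE ltn_ord.
- by rewrite coprime_sym; apply: (H 1 j i) => //; rewrite inE ltn_ord.
- by move: ij; rewrite (val_inj eq) eqxx.
Qed.

Lemma NQ_prod : NQ Q = (\prod_(i < n) qq i)%N.
Proof. by rewrite /NQ (big_nth 1) big_mkord. Qed.

Lemma coprime_prod (p : nat) (P : pred 'I_n) (F : 'I_n -> nat) :
  (forall i, P i -> coprime p (F i)) -> coprime p (\prod_(i | P i) F i).
Proof.
move=> H; apply: (big_ind (fun x => coprime p x)) => //.
- exact: coprimen1.
- by move=> x y cx cy; rewrite coprimeMr cx cy.
Qed.

Lemma CL (T : {set 'I_n}) (v : 'I_n -> int) :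
  ((\prod_(i in T) qq i)%N%:Z %|
     \sum_(i in T) v i * (\prod_(l in T | l != i) qq l)%N%:Z)%Z ->
  forall j : 'I_n, j \in T -> ((qq j)%:Z %| v j)%Z.
Proof.
move=> H j jT.
have Dj : (\prod_(i in T) qq i = qq j * \prod_(l in T | l != j) qq l)%N.
  by rewrite (bigD1 j).
have H1 : ((qq j)%:Z %| \sum_(i in T) v i * (\prod_(l in T | l != i) qq l)%N%:Z)%Z.
  by apply: dvdz_trans H; rewrite Dj PoszM dvdz_mulr.
rewrite (bigD1 j) //= in H1.
have H2 : ((qq j)%:Z %| \sum_(i in T | i != j) v i * (\prod_(l in T | l != i) qq l)%N%:Z)%Z.
  apply: rpred_sum => i /andP[iT ij].
  apply: dvdz_mull.
  by rewrite (bigD1 j) /= ?jT 1?eq_sym // PoszM dvdz_mulr.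
rewrite rpredDr // in H1.
rewrite Gauss_dvdzl // in H1.
rewrite coprimezE /=; apply: coprime_prod => i /andP[_ ij].
by apply: qq_cop; rewrite eq_sym.
Qed.

End NT.


Section Freq.
Variable R : realType.
Local Notation C := R[i].
Variable Q : seq nat.
Local Notation n := (size Q).
Local Notation qq := (qq Q).

Definition theta (v : 'I_n -> int) : R := \sum_(i < n) (v i)%:~R / (qq i)%:R.
Definition Ev (v : 'I_n -> int) (x : nat) : C := ee (theta v * x%:R).

Definition DT (T : {set 'I_n}) : nat := (\prod_(i in T) qq i)%N.
Definition BT (T : {set 'I_n}) (v : 'I_n -> int) : int :=
  \sum_(i in T) v i * (\prod_(l in T | l != i) qq l)%N%:Z.

Hypothesis Qpos : all (fun q => (0 < q)%N) Q.
Hypothesis Qcop : pairwise coprime Q.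

Lemma qq_neq0 i : (qq i)%:R != 0 :> R.
Proof. by rewrite pnatr_eq0 -lt0n qq_gt0. Qed.

Lemma DT_gt0 T : (0 < DT T)%N.
Proof. by rewrite /DT prodn_gt0 // => i; apply: qq_gt0. Qed.

Lemma theta_T (T : {set 'I_n}) (v : 'I_n -> int) :
  (forall i, i \notin T -> v i = 0) ->
  theta v = (BT T v)%:~R / (DT T)%:R.
Proof.
move=> supp.
rewrite /theta (bigID (mem T)) /= [X in _ + X]big1 ?addr0; last first.
  by move=> i /supp ->; rewrite mul0r.
rewrite /BT rmorph_sum /= mulr_suml; apply: eq_bigr => i iT.
have DTi : DT T = (qq i * \prod_(l in T | l != i) qq l)%N by rewrite /DT (bigD1 i).
rewrite rmorphM /= DTi natrM.
have -> : ((\prod_(l in T | l != i) qq l)%N%:Z)%:~R = (\prod_(l in T | l != i) qq l)%:R :> R by [].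
have P0 : (\prod_(l in T | l != i) qq l)%:R != 0 :> R.
  by rewrite pnatr_eq0 -lt0n prodn_gt0 // => l; apply: qq_gt0.
by rewrite invfM [_^-1 * _^-1]mulrC mulrA mulfK.
Qed.

Lemma Ev_divisible (v : 'I_n -> int) x :
  (forall i, ((qq i)%:Z %| v i)%Z) -> Ev v x = 1.
Proof.
move=> H; rewrite /Ev /theta.
have -> : \sum_(i < n) (v i)%:~R / (qq i)%:R = (\sum_(i < n) (v i %/ (qq i)%:Z)%Z)%:~R :> R.
  rewrite rmorph_sum; apply: eq_bigr => i _.
  rewrite -{1}(divzK (H i)) rmorphM /= mulfK //; exact: qq_neq0.
by rewrite -[x%:R]/((x%:Z)%:~R) -rmorphM ee_int.
Qed.

Lemma EvX v (x : nat) : Ev v x = ee (theta v) ^+ x.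
Proof. by rewrite /Ev eeMn. Qed.

Lemma G_side (v : 'I_n -> int) :
  (exists j, ~~ ((qq j)%:Z %| v j)%Z) -> \sum_(x < NQ Q) Ev v x = 0.
Proof.
move=> [j nj].
have supp : forall i, i \notin [set: 'I_n] -> v i = 0 by move=> i; rewrite inE.
have ND : NQ Q = DT [set: 'I_n] by rewrite NQ_prod /DT; apply: eq_bigl => i; rewrite inE.
have th := theta_T _ _ supp.
under eq_bigr => x _ do rewrite EvX.
apply: geom_zero.
  rewrite -eeMn th ND mulfVK ?ee_int //.
  by rewrite pnatr_eq0 -lt0n DT_gt0.
rewrite th; apply: ee_frac; first exact: DT_gt0.
apply: contra nj => H; have := @CL Q Qcop [set: _] v H j; apply; by rewrite inE.
Qed.

Lemma Gamma_side (v : 'I_n -> int) (a r L : nat) :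
  all (coprime r) Q ->
  (exists j, ~~ ((qq j)%:Z %| v j)%Z) ->
  `|\sum_(k < L) Ev v (a + r * k)| <= (DT [set i | v i != 0])%:R.
Proof.
move=> rcop [j nj].
set T := [set i | v i != 0].
have supp : forall i, i \notin T -> v i = 0 by move=> i; rewrite inE negbK => /eqP.
have th := theta_T _ _ supp.
set u : C := ee (theta v * r%:R).
have E : forall k, Ev v (a + r * k) = ee (theta v * a%:R) * u ^+ k.
  move=> k; rewrite /Ev /u -eeMn -eeD natrD natrM mulrDr mulrA //.
under eq_bigr => k _ do rewrite E.
rewrite -mulr_sumr normrM norm_ee mul1r.
have D0 : (DT T)%:R != 0 :> R by rewrite pnatr_eq0 -lt0n DT_gt0.
apply: geom_bound; [exact: norm_ee | | | exact: DT_gt0].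
  rewrite /u -eeMn th mulrAC mulfVK // -[r%:R]/((r%:Z)%:~R) -rmorphM.
  exact: ee_int.
rewrite /u; have -> : theta v * r%:R = (BT T v * r%:Z)%:~R / (DT T)%:R.
  by rewrite th mulrAC rmorphM.
apply: ee_frac; first exact: DT_gt0.
apply: contra nj => H.
have H' : ((\prod_(i in T) qq i)%N%:Z %|
     \sum_(i in T) (v i * r%:Z) * (\prod_(l in T | l != i) qq l)%N%:Z)%Z.
  move: H; rewrite /BT mulr_suml; congr (_ %| _)%Z; apply: eq_bigr => i _.
  by rewrite mulrAC.
have cr : forall i, coprimez (qq i)%:Z r%:Z.
  move=> i; rewrite coprimezE /= coprime_sym; exact: (all_nthP 1 rcop).
case: (boolP (j \in T)) => jT.
  by have := @CL Q Qcop T (fun i => v i * r%:Z) H' j jT; rewrite Gauss_dvdzl.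
by rewrite supp // dvdz0.
Qed.

End Freq.


Section Supp.
Variable Q : seq nat.
Local Notation n := (size Q).
Definition supp (v : 'I_n -> int) := [set i | v i != 0].

Lemma card_supp_sub (v w : 'I_n -> int) :
  (#|supp (fun i => (v i - w i)%R)| <= #|supp v| + #|supp w|)%N.
Proof.
apply: (leq_trans _ (leq_card_setU (supp v) (supp w)).1); apply: subset_leq_card.
apply/fintype.subsetP => i; rewrite !inE; apply: contraR; rewrite negb_or !negbK.
by move=> /andP[/eqP -> /eqP ->]; rewrite subr0.
Qed.

Lemma card_supp_sum (A : Type) (s : seq A) (F : A -> 'I_n -> int) :
  (#|supp (fun i => (\sum_(k <- s) F k i)%R)| <= \sum_(k <- s) #|supp (F k)|)%N.
Proof.
elim: s => [|k s IH].
  have -> : supp (fun i => (\sum_(k <- [::]) F k i)%R) = finset.set0.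
    by apply/setP => i; rewrite !inE big_nil eqxx.
  by rewrite cards0.
rewrite big_cons; apply: (leq_trans _ (leq_add (leqnn _) IH)).
apply: (leq_trans _ (leq_card_setU (supp (F k)) (supp (fun i => (\sum_(k <- s) F k i)%R))).1).
apply: subset_leq_card.
apply/fintype.subsetP => i; rewrite !inE big_cons; apply: contraR; rewrite negb_or !negbK.
by move=> /andP[/eqP -> /eqP ->]; rewrite addr0.
Qed.

Lemma qq_le_max i : (qq Q i <= maxQ Q)%N.
Proof. by rewrite /qq /maxQ; apply: (@leq_bigmax_seq _ _ xpredT id) => //; exact: mem_nth. Qed.

Lemma DT_le T : (DT Q T <= maxQ Q ^ #|T|)%N.
Proof.
rewrite /DT -prod_nat_const; apply: leq_prod => i _; exact: qq_le_max.
Qed.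
End Supp.

Section Freq2.
Variable R : realType.
Local Notation C := R[i].
Variable Q : seq nat.
Local Notation n := (size Q).
Local Notation qq := (qq Q).
Local Notation thetaQ := (@theta R Q).
Local Notation EvQ := (@Ev R Q).

Lemma ee_sum (A : Type) (s : seq A) (t : A -> R) :
  ee (\sum_(k <- s) t k) = \prod_(k <- s) ee (t k) :> C.
Proof. exact: (big_morph _ (@eeD R) (@ee0 R)). Qed.

Lemma theta_sum (A : Type) (s : seq A) (F : A -> 'I_n -> int) :
  thetaQ (fun i => \sum_(k <- s) F k i) = \sum_(k <- s) thetaQ (F k).
Proof.
rewrite /theta exchange_big /=; apply: eq_bigr => i _.
by rewrite rmorph_sum mulr_suml.
Qed.

Lemma Ev_sum (A : Type) (s : seq A) (F : A -> 'I_n -> int) x :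
  EvQ (fun i => \sum_(k <- s) F k i) x = \prod_(k <- s) EvQ (F k) x.
Proof. by rewrite /Ev theta_sum mulr_suml ee_sum. Qed.

Lemma Ev_sub (v w : 'I_n -> int) x :
  EvQ (fun i => v i - w i) x = EvQ v x * (EvQ w x)^*%C.
Proof.
rewrite /Ev /theta -eeN -eeD; congr ee.
rewrite -mulNr -mulrDl -sumrN -big_split /=; congr (_ * _).
by apply: eq_bigr => i _; rewrite rmorphB /= mulrBl.
Qed.

Lemma charval_Ev (xi : charQ Q) x :
  char_val Q xi x = EvQ (fun i => (val (xi i))%:Z) x.
Proof.
rewrite /char_val /Ev /theta mulr_suml; congr ee.
by apply: eq_bigr => i _; rewrite mulrAC.
Qed.

Hypothesis Qpos : all (fun q => (0 < q)%N) Q.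

Lemma Ev_mod v x : EvQ v (x %% NQ Q) = EvQ v x.
Proof.
have supp : forall i, i \notin [set: 'I_n] -> v i = 0 by move=> i; rewrite inE.
have ND : NQ Q = DT Q [set: 'I_n] by rewrite NQ_prod /DT; apply: eq_bigl => i; rewrite inE.
have th := @theta_T R Q Qpos _ _ supp.
have hN : thetaQ v * (NQ Q)%:R = (BT Q [set: 'I_n] v)%:~R.
  rewrite th ND mulfVK //; by rewrite pnatr_eq0 -lt0n DT_gt0.
rewrite {2}(divn_eq x (NQ Q)) /Ev natrD mulrDr eeD natrM mulrCA hN.
by rewrite -[((x %/ NQ Q)%:R : R)]/(((x %/ NQ Q)%N%:Z)%:~R) -rmorphM ee_int mul1r.
Qed.

End Freq2.


Section Expand.
Variable R : realType.
Local Notation C := R[i].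
Variable Q : seq nat.
Local Notation n := (size Q).
Local Notation Ev := (@Ev R Q).
Variables (d m : nat) (g : nat -> C).

Definition Spred : pred (charQ Q) := fun xi => is_charQ Q xi && (char_wt Q xi == d).
Definition vec (xi : charQ Q) : 'I_n -> int := fun i => (val (xi i))%:Z.
Definition cc (xi : charQ Q) : C := fourier Q g xi.
Definition Vs (phi : {ffun 'I_m -> charQ Q}) : 'I_n -> int :=
  fun i => \sum_(k < m) vec (phi k) i.
Definition bb (phi : {ffun 'I_m -> charQ Q}) : C := \prod_(k < m) cc (phi k).

Lemma Wd_Ev x : Wd Q d g x = \sum_(xi | Spred xi) cc xi * Ev (vec xi) x.
Proof. by rewrite /Wd; apply: eq_bigr => xi _; rewrite charval_Ev. Qed.

Lemma Wpow x : Wd Q d g x ^+ m =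
  \sum_(phi in ffun_on Spred) bb phi * Ev (Vs phi) x.
Proof.
rewrite -[m in LHS]card_ord -prodr_const Wd_Ev.
rewrite (bigA_distr_big Spred (fun (k : 'I_m) xi => cc xi * Ev (vec xi) x)).
apply: eq_bigr => phi _; rewrite big_split /=; congr (_ * _).
by rewrite /Vs Ev_sum.
Qed.

Lemma expandW x :
  (modc (Wd Q d g x) ^+ (2 * m))%:C%C =
  \sum_(phi1 in ffun_on Spred) \sum_(phi2 in ffun_on Spred)
     (bb phi1 * (bb phi2)^*%C) * Ev (fun i => Vs phi1 i - Vs phi2 i) x.
Proof.
rewrite rmorphXn /= modcE exprM sqr_normc exprMn -rmorphXn /= Wpow.
rewrite rmorph_sum /= big_distrlr /=; apply: eq_bigr => phi1 _.
apply: eq_bigr => phi2 _; rewrite Ev_sub rmorphM /=.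
by rewrite mulrACA.
Qed.

End Expand.


Section Term.
Variable R : realType.
Local Notation C := R[i].
Variable Q : seq nat.
Local Notation n := (size Q).
Local Notation Ev := (@Ev R Q).
Local Notation qq := (qq Q).
Variables (d m : nat).


Lemma supp_vec xi : Spred Q d xi -> #|supp Q (vec Q xi)| = d.
Proof.
move=> /andP[/forallP lt /eqP <-]; rewrite /char_wt; apply: eq_card => i.
rewrite !inE /vec.
have hx := lt i.
have [->|x0] := eqVneq (val (xi i)) 0%N; first by rewrite dvdn0.
rewrite eqz_nat x0; apply/esym/negP => /(dvdn_leq _).
by rewrite lt0n x0 leqNgt hx => /(_ isT).
Qed.

Lemma supp_Vs (phi : {ffun 'I_m -> charQ Q}) : phi \in ffun_on (Spred Q d) ->
  (#|supp Q (Vs Q m phi)| <= m * d)%N.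
Proof.
move=> /ffun_onP H.
apply: (leq_trans (card_supp_sum Q _ (index_enum 'I_m) (fun k => vec Q (phi k)))).
rewrite (eq_bigr (fun _ => d)); last by move=> k _; apply: supp_vec; exact: H.
by rewrite sum_nat_const card_ord.
Qed.

Hypothesis Qpos : all (fun q => (0 < q)%N) Q.
Hypothesis Qcop : pairwise coprime Q.

Lemma NQ_gt0 : (0 < NQ Q)%N.
Proof. by rewrite NQ_prod prodn_gt0 // => i; exact: qq_gt0. Qed.

Lemma term_bound (v : 'I_n -> int) (a r L K : nat) :
  all (coprime r) Q -> (0 < L)%N -> (#|supp Q v| <= K)%N ->
  `| (L%:R)^-1 * \sum_(k < L) Ev v (a + r * k)
     - ((NQ Q)%:R)^-1 * \sum_(x < NQ Q) Ev v x | <= (maxQ Q ^ K)%:R / L%:R :> C.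
Proof.
move=> rcop L0 sK.
have L0' : (L%:R : C) != 0 by rewrite pnatr_eq0 -lt0n.
case: (boolP [forall j, ((qq j)%:Z %| v j)%Z]) => [/forallP H|/forallPn [j nj]].
  have E1 : forall x, Ev v x = 1 by move=> x; exact: (@Ev_divisible R Q Qpos v x H).
  under eq_bigr => k _ do rewrite E1.
  under [X in _ - _ * X]eq_bigr => k _ do rewrite E1.
  rewrite !sumr_const !card_ord mulVf // mulVf ?subrr ?normr0.
    by rewrite divr_ge0 ?ler0n.
  by rewrite pnatr_eq0 -lt0n NQ_gt0.
rewrite G_side //; last by exists j.
rewrite mulr0 subr0 normrM ger0_norm ?invr_ge0 ?ler0n // mulrC ler_wpM2r ?invr_ge0 ?ler0n //.
apply: (le_trans (@Gamma_side R Q Qpos Qcop v a r L rcop (ex_intro _ j nj))).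
rewrite ler_nat; apply: (leq_trans (DT_le _ _)); apply: leq_pexp2l => //.
by apply: (leq_trans (@qq_gt0 Q Qpos j)); apply: qq_le_max.
Qed.

End Term.


Lemma sum_iota_ord (T : Type) (idx : T) (op : Monoid.com_law idx) (L : nat) (h : nat -> T) :
  \big[op/idx]_(k <- iota 0 L) h k = \big[op/idx]_(k < L) h k.
Proof. by rewrite -(big_mkord xpredT) /index_iota subn0. Qed.

Section Prog.
Variable R : realType.
Local Notation C := R[i].
Variable Q : seq nat.
Variables (a r L : nat) (f : nat -> C).
Hypothesis Qpos : all (fun q => (0 < q)%N) Q.
Hypothesis Qcop : pairwise coprime Q.
Hypotheses (ha : (1 <= a)%N) (hr : (1 <= r)%N) (hL : (1 <= L)%N).
Hypothesis hN : (a + r * L.-1 <= NQ Q)%N.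
Local Notation N := (NQ Q).
Local Notation P := (AP a r L).
Local Notation PP := (map (piQ Q) (AP a r L)).

Lemma size_P : size P = L.
Proof. by rewrite size_map size_iota. Qed.

Lemma nth_P k : (k < L)%N -> nth 0%N P k = (a + r * k)%N.
Proof. by move=> kL; rewrite (nth_map 0%N) ?size_iota // nth_iota. Qed.

Lemma P_range x : x \in P -> (1 <= x <= N)%N.
Proof.
move=> /mapP [k]; rewrite mem_iota add0n => kL ->.
apply/andP; split; first by apply: (leq_trans ha); apply: leq_addr.
apply: leq_trans hN; rewrite leq_add2l leq_mul2l; apply/orP; right.
by rewrite -ltnS prednK // (leq_trans _ kL).
Qed.

Lemma uniq_P : uniq P.
Proof.
rewrite map_inj_uniq ?iota_uniq // => k1 k2 /eqP.
by rewrite eqn_add2l eqn_mul2l eqn0Ngt hr /= => /eqP.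
Qed.

Lemma piQ_inj : {in P &, injective (piQ Q)}.
Proof.
move=> x y /P_range /andP[x1 xN] /P_range /andP[y1 yN]; rewrite /piQ.
have md : forall z, (1 <= z <= N)%N -> (z %% N = if z == N then 0 else z)%N.
  move=> z /andP[z1 zN]; case: eqP => [->|zn]; first by rewrite modnn.
  by rewrite modn_small // ltn_neqAle zN andbT; apply/eqP.
rewrite !md ?x1 ?y1 ?xN ?yN //.
case: eqP => [->|xn]; case: eqP => [->|yn] //.
- by move=> y0; move: y1; rewrite -y0.
- by move=> x0; move: x1; rewrite x0.
Qed.

Lemma uniq_PP : uniq PP.
Proof. by rewrite map_inj_in_uniq ?uniq_P //; exact: piQ_inj. Qed.

Lemma size_PP : size PP = L.
Proof. by rewrite size_map size_P. Qed.

Lemma NQ_gt0' : (0 < N)%N.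
Proof. by rewrite NQ_prod prodn_gt0 // => i; exact: qq_gt0. Qed.

Lemma PP_lt x : x \in PP -> (x < N)%N.
Proof. by move=> /mapP [y _ ->]; rewrite /piQ ltn_pmod // NQ_gt0'. Qed.

Lemma avg_Gamma (F : nat -> R) : (forall x, F (x %% N)%N = F x) ->
  avg (GammaQ P Q) F = (L%:R)^-1 * \sum_(k < L) F (a + r * k)%N.
Proof.
move=> Fp; rewrite /avg /GammaQ undup_id ?uniq_PP // size_PP; congr (_ * _).
by rewrite big_map big_map sum_iota_ord; apply: eq_bigr => k _; rewrite /piQ Fp.
Qed.

Lemma avg_G (F : nat -> R) : avgG Q F = (N%:R)^-1 * \sum_(x < N) F x.
Proof. by rewrite /avgG /avg size_iota sum_iota_ord. Qed.

End Prog.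


Section Coef.
Variable R : realType.
Local Notation C := R[i].
Variable Q : seq nat.
Variables (a r L : nat) (f : nat -> C).
Hypothesis Qpos : all (fun q => (0 < q)%N) Q.
Hypotheses (ha : (1 <= a)%N) (hr : (1 <= r)%N) (hL : (1 <= L)%N).
Hypothesis hN : (a + r * L.-1 <= NQ Q)%N.
Local Notation N := (NQ Q).
Local Notation P := (AP a r L).
Local Notation PP := (map (piQ Q) (AP a r L)).
Local Notation g := (PsiPQ P Q f).

Lemma sum_g : \sum_(x < N) `|g x| =
  \sum_(k < L) (N%:R / L%:R) * `|f (nth 0%N P k)|.
Proof.
have uPP := @uniq_PP Q a r L ha hr hL hN.
rewrite -(@sum_iota_ord _ 0 +%R N (fun x => `|g x|)) (bigID (mem PP)) /= [X in _ + X]big1 ?addr0; last first.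
  by move=> x xn; rewrite /PsiPQ (negbTE xn) normr0.
rewrite -big_filter.
rewrite (perm_big PP); last first.
  apply: uniq_perm; [by rewrite filter_uniq ?iota_uniq | exact: uPP |].
  move=> x; rewrite mem_filter mem_iota add0n andb_idr //.
  exact: (@PP_lt Q a r L Qpos).
rewrite (big_nth 0%N) size_PP big_mkord; apply: eq_bigr => k _.
rewrite /PsiPQ mem_nth ?size_PP // index_uniq ?size_PP ?uPP //.
rewrite normrM; congr (_ * _).
rewrite size_P ger0_norm; last by rewrite -[0 : C]/(0%:C)%C lecR divr_ge0 ?ler0n.
by rewrite rmorphM fmorphV /= !rmorph_nat.
Qed.

Lemma coef_bound (xi : charQ Q) :
  `|fourier Q g xi| <= (avg P (fun x => modc (f x)))%:C%C.
Proof.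
have N0 : (N%:R : C) != 0 by rewrite pnatr_eq0 -lt0n (@NQ_gt0' Q Qpos).
have L0 : (L%:R : C) != 0 by rewrite pnatr_eq0 -lt0n.
rewrite /fourier normrM ger0_norm ?invr_ge0 ?ler0n //.
apply: (le_trans (ler_wpM2l _ (ler_norm_sum _ _ _))); first by rewrite invr_ge0 ler0n.
under eq_bigr => x _ do rewrite normrM normcJ norm_ee mulr1.
rewrite sum_g -mulr_sumr mulrA.
have -> : (N%:R)^-1 * (N%:R / L%:R) = (L%:R)^-1 :> C by rewrite mulrA mulVf // mul1r.
rewrite /avg rmorphM /= fmorphV /= rmorph_nat rmorph_sum /=.
rewrite (big_nth 0%N) size_P big_mkord; apply: ler_wpM2l; first by rewrite invr_ge0 ler0n.
by apply: ler_sum => k _; rewrite modcE.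
Qed.

End Coef.


Section Card.
Variable Q : seq nat.
Local Notation n := (size Q).
Local Notation M := (maxQ Q).
Hypothesis Quniq : uniq Q.
Hypothesis Qpos : all (fun q => (0 < q)%N) Q.
Variable d : nat.
Hypothesis d1 : (1 <= d)%N.

Lemma size_le_max : (n <= M)%N.
Proof.
have -> : M = size (iota 1 M) by rewrite size_iota.
apply: uniq_leq_size => // x xQ; rewrite mem_iota.
rewrite (allP Qpos x xQ) /= add1n ltnS.
by apply: (@leq_bigmax_seq _ _ xpredT id).
Qed.

Definition lst (xi : charQ Q) : seq ('I_n * 'I_M) :=
  [seq (i, xi i) | i <- enum (supp Q (vec Q xi))].

Lemma size_lst xi : Spred Q d xi -> size (lst xi) = d.
Proof. by move=> S; rewrite size_map -cardE (@supp_vec Q d xi S). Qed.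

Lemma lst_inj : {in Spred Q d &, injective lst}.
Proof.
move=> x1 x2 S1 S2 E; apply/ffunP => i.
have key : forall y1 y2, lst y1 = lst y2 -> i \in supp Q (vec Q y1) -> y1 i = y2 i.
  move=> y1 y2 Ey iS.
  have : (i, y1 i) \in lst y2 by rewrite -Ey; apply: map_f; rewrite mem_enum.
  by case/mapP => j _ [-> ->].
case: (boolP (i \in supp Q (vec Q x1))) => [iS1|iS1]; first exact: key.
case: (boolP (i \in supp Q (vec Q x2))) => [iS2|iS2]; first by apply/esym; apply: key.
move: iS1 iS2; rewrite !inE !negbK /vec !eqz_nat => /eqP h1 /eqP h2.
by apply: val_inj; rewrite /= h1 h2.
Qed.

Lemma card_S : (#|Spred Q d| <= M ^ (2 * d))%N.
Proof.
case: (pickP (Spred Q d)) => [x0 S0|none]; last first.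
  by rewrite (eq_card0 none).
have : (0 < #|supp Q (vec Q x0)|)%N by rewrite (@supp_vec Q d x0 S0).
rewrite card_gt0 => /finset.set0Pn [i0 _].
pose z0 := (i0, x0 i0).
pose enc (xi : charQ Q) : d.-tuple ('I_n * 'I_M) := [tuple nth z0 (lst xi) j | j < d].
have encI : {in Spred Q d &, injective enc}.
  move=> y1 y2 S1 S2 E; apply: lst_inj => //.
  apply: (@eq_from_nth _ z0); first by rewrite !size_lst.
  move=> j; rewrite size_lst // => jd.
  have := congr1 (fun t => tnth t (Ordinal jd)) E.
  by rewrite !tnth_mktuple.
rewrite -(card_in_imset encI).
apply: (leq_trans (max_card _)).
rewrite card_tuple card_prod !card_ord expnM leq_exp2r // -mulnn leq_mul2r.
by rewrite size_le_max orbT.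
Qed.

End Card.


Lemma normC_real (R : realType) (x : R) : `|x%:C%C| = (`|x|)%:C%C :> R[i].
Proof. by rewrite normc_def /= expr0n /= addr0 sqrtr_sqr. Qed.

Lemma swap3 (R : realType) (I J : finType) (PI : pred I) (PJ : pred J) (K : nat)
  (c : R[i]) (b : I -> J -> R[i]) (E : I -> J -> 'I_K -> R[i]) :
  c * \sum_(k < K) \sum_(i | PI i) \sum_(j | PJ j) b i j * E i j k =
  \sum_(i | PI i) \sum_(j | PJ j) b i j * (c * \sum_(k < K) E i j k).
Proof.
rewrite exchange_big mulr_sumr; apply: eq_bigr => i _.
rewrite exchange_big mulr_sumr; apply: eq_bigr => j _.
by rewrite -mulr_sumr mulrCA.
Qed.

Theorem lemma3p4 (R : realType) (X : R) (Q : seq nat) (a r L d m : nat)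
    (f : nat -> R[i]) (alpha : R) :
  1 <= X ->
  uniq Q -> all (fun q => (0 < q)%N) Q -> pairwise coprime Q ->
  X <= (NQ Q)%:R ->
  (1 <= a)%N -> (1 <= r)%N -> (1 <= L)%N ->
  (a + r * L.-1)%:R <= X ->
  X `^ (3 / 4) <= L%:R ->
  all (coprime r) Q ->
  (1 <= d)%N -> (1 <= m)%N ->
  ((maxQ Q) ^ (d * m))%:R <= X `^ (1 / 16) ->
  alpha = avg (AP a r L) (fun x => modc (f x)) ->
  let g := PsiPQ (AP a r L) Q f in
  avg (GammaQ (AP a r L) Q) (fun x => modc (Wd Q d g x) ^+ (2 * m))
    <= avgG Q (fun x => modc (Wd Q d g x) ^+ (2 * m))
       + alpha ^+ (2 * m) * X `^ (- (1 / 4)).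
Proof.
move=> hX1 Quniq Qpos Qcop hXN ha hr hL hPX hLX rcop hd hm hMX halpha.
cbv zeta; set g := PsiPQ (AP a r L) Q f.
have hN : (a + r * L.-1 <= NQ Q)%N by rewrite -(ler_nat R); apply: le_trans hPX hXN.
set F := fun x => modc (Wd Q d g x) ^+ (2 * m).
have Fp : forall x, F (x %% NQ Q)%N = F x.
  move=> x; rewrite /F !Wd_Ev; congr (modc _ ^+ _); apply: eq_bigr => xi _.
  by rewrite Ev_mod.
rewrite (@avg_Gamma R Q a r L ha hr hL hN F Fp) avg_G.
set A := _ * \sum_(k < L) _; set B := _ * \sum_(x < NQ Q) _.
set Fam := ffun_on (Spred Q d) : pred {ffun 'I_m -> charQ Q}.
set K := (m * d + m * d)%N.
set T : R := (#|Fam| * #|Fam|)%:R * alpha ^+ (2 * m) * ((maxQ Q ^ K)%:R / L%:R).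
have al0 : 0 <= alpha by rewrite halpha /avg mulr_ge0 ?invr_ge0 ?ler0n ?sumr_ge0 // => x _; apply: modc_ge0.
have key : `|A - B| <= T.
  pose bq (p1 p2 : {ffun 'I_m -> charQ Q}) := bb R Q m g p1 * (bb R Q m g p2)^*%C.
  pose tau (p1 p2 : {ffun 'I_m -> charQ Q}) := fun i => Vs Q m p1 i - Vs Q m p2 i.
  pose Dq (p1 p2 : {ffun 'I_m -> charQ Q}) :=
    (L%:R)^-1 * \sum_(k < L) Ev R Q (tau p1 p2) (a + r * k)
    - ((NQ Q)%:R)^-1 * \sum_(x < NQ Q) Ev R Q (tau p1 p2) x.
  have E : (A - B)%:C%C = \sum_(p1 in Fam) \sum_(p2 in Fam) bq p1 p2 * Dq p1 p2.
    rewrite /A /B rmorphB !rmorphM /= !fmorphV /= !rmorph_nat !rmorph_sum /=.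
    rewrite /F; under eq_bigr => k _ do rewrite expandW.
    under [X in _ - _ * X]eq_bigr => x _ do rewrite expandW.
    rewrite (@swap3 R _ _ Fam Fam L (L%:R^-1) bq (fun p1 p2 (k : 'I_L) => Ev R Q (tau p1 p2) (a + r * k))).
    rewrite (@swap3 R _ _ Fam Fam (NQ Q) ((NQ Q)%:R^-1) bq (fun p1 p2 (x : 'I_(NQ Q)) => Ev R Q (tau p1 p2) x)).
    rewrite -sumrB; apply: eq_bigr => p1 _; rewrite -sumrB; apply: eq_bigr => p2 _.
    by rewrite mulrBr.
  have cb : forall xi, `|cc R Q g xi| <= alpha%:C%C.
    move=> xi; rewrite halpha; exact: (@coef_bound R Q a r L f Qpos ha hr hL hN xi).
  have bbl : forall p, `|bb R Q m g p| <= alpha%:C%C ^+ m.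
    move=> p; rewrite /bb normr_prod -[m in _ ^+ m]card_ord -prodr_const.
    by apply: ler_prod => k _; rewrite normr_ge0 cb.
  have Dle : forall p1 p2, p1 \in Fam -> p2 \in Fam ->
      `|Dq p1 p2| <= (maxQ Q ^ K)%:R / L%:R.
    move=> p1 p2 h1 h2; apply: (@term_bound R Q Qpos Qcop (tau p1 p2) a r L K rcop hL).
    apply: (leq_trans (card_supp_sub _ _ _)); apply: leq_add; exact: supp_Vs.
  have a0 : 0 <= alpha%:C%C :> R[i] by rewrite -[0 : R[i]]/(0%:C)%C lecR.
  have Bnd : `|\sum_(p1 in Fam) \sum_(p2 in Fam) bq p1 p2 * Dq p1 p2|
      <= \sum_(p1 in Fam) \sum_(p2 in Fam) (alpha%:C%C ^+ (2 * m) * ((maxQ Q ^ K)%:R / L%:R)).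
    apply: (le_trans (ler_norm_sum _ _ _)); apply: ler_sum => p1 h1.
    apply: (le_trans (ler_norm_sum _ _ _)); apply: ler_sum => p2 h2.
    rewrite normrM; apply: ler_pM => //.
    rewrite /bq normrM normcJ mul2n -addnn exprD.
    by apply: ler_pM => //; apply: bbl.
    exact: Dle.
  rewrite !sumr_const in Bnd.
  have : `|(A - B)%:C%C| <= T%:C%C.
    rewrite E; apply: (le_trans Bnd); rewrite le_eqVlt; apply/orP; left; apply/eqP.
    have Tc : T%:C%C = (#|Fam| * #|Fam|)%:R * (alpha%:C%C ^+ (2 * m) * ((maxQ Q ^ K)%:R / L%:R)).
      rewrite /T !(rmorphM (real_complex R)) (rmorphXn (real_complex R)).
      by rewrite (fmorphV (real_complex R)) !rmorph_nat -mulrA.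
    by rewrite Tc -mulrnA [RHS]mulr_natl.
  by rewrite normC_real lecR.
have fin : T <= alpha ^+ (2 * m) * X `^ (- (1 / 4)).
  set y := X `^ (1 / 16).
  have y1 : 1 <= y.
    have := ler_powR hX1 (_ : 0 <= 1 / 16); rewrite powRr0; apply; lra.
  have y0 : 0 < y by apply: lt_le_trans y1.
  have hL12 : y ^+ 12 <= L%:R.
    rewrite -(powR_mulrn _ (ltW y0)) /y -powRrM.
    have -> : 1 / 16 * 12%:R = 3 / 4 :> R by lra.
    exact: hLX.
  have hX4 : X `^ (- (1 / 4)) = (y ^+ 4)^-1.
    rewrite powRN -(powR_mulrn _ (ltW y0)) /y -powRrM.
    by have -> : 1 / 16 * 4%:R = 1 / 4 :> R by lra.
  set e := (d * m)%N.
  have cS : (#|Fam| <= (maxQ Q ^ e) ^ 2)%N.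
    rewrite card_ffun_on card_ord.
    apply: (@leq_trans ((maxQ Q ^ (2 * d)) ^ m)); first by rewrite leq_exp2r // card_S.
    by rewrite -!expnM /e [in X in (_ <= _ ^ X)%N]mulnC mulnA.
  have cK : (maxQ Q ^ K = (maxQ Q ^ e) ^ 2)%N.
    by rewrite -!expnM /K /e [in X in (_ ^ X)%N = _]mulnC muln2 addnn.
  have cnt : ((#|Fam| * #|Fam|) * maxQ Q ^ K <= (maxQ Q ^ e) ^ 6)%N.
    rewrite cK; apply: (@leq_trans (((maxQ Q ^ e) ^ 2 * (maxQ Q ^ e) ^ 2) * (maxQ Q ^ e) ^ 2)).
      by rewrite leq_mul2r leq_mul ?cS ?orbT.
    by rewrite -!expnD.
  have cnt' : ((#|Fam| * #|Fam|) * maxQ Q ^ K)%:R <= y ^+ 6.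
    apply: (le_trans (_ : _ <= ((maxQ Q ^ e)%:R) ^+ 6)).
      by rewrite -natrX ler_nat.
    by rewrite lerXn2r // ?nnegrE ?ler0n // ltW.
  have eqT : T = alpha ^+ (2 * m) * (((#|Fam| * #|Fam|) * maxQ Q ^ K)%:R / L%:R).
    by rewrite /T !natrM [X in X * _ = _]mulrC -!mulrA.
  rewrite eqT hX4; apply: ler_wpM2l; first exact: exprn_ge0.
  have L0 : (0 : R) < L%:R by rewrite ltr0n.
  rewrite ler_pdivrMr //.
  apply: (le_trans cnt'); apply: (@le_trans _ _ ((y ^+ 4)^-1 * y ^+ 12)); last first.
    by rewrite ler_wpM2l // invr_ge0 exprn_ge0 // ltW.
  have -> : y ^+ 12 = y ^+ 4 * y ^+ 8 by rewrite -exprD.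
  rewrite mulKf ?expf_neq0 ?gt_eqF //.
  have -> : y ^+ 8 = y ^+ 6 * y ^+ 2 by rewrite -exprD.
  by rewrite ler_peMr ?exprn_ge0 ?exprn_ege1 // ltW.
by rewrite -lerBlDl; apply: le_trans fin; apply: le_trans key; apply: ler_norm.
Qed.
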